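(* Let $f:\mathbb{R}^n\to\mathbb{R}$ be bounded above on bounded sets, $x\in\mathbb{R}^n$, $\epsilon>0$, and suppose $g_x$ is Lipschitz at $\epsilon$ (i.e. $\operatorname{lip}g_x(\epsilon)<\infty$). Then $\operatorname{calm}\bar f_\epsilon(x)\le\operatorname{lip}g_x(\epsilon)=\sup\{|y|:y\in\partial g_x(\epsilon)\}$.
   Context: $\bar f_\epsilon(x):=\sup\{f(x'):|x'-x|\le\epsilon\}$; $g_x(\epsilon):=\bar f_\epsilon(x)$ for $\epsilon\ge0$. $\operatorname{calm}F(\bar y):=\limsup_{y\to\bar y,\,y\ne\bar y}\frac{|F(y)-F(\bar y)|}{|y-\bar y|}$, $\operatorname{lip}F(\bar y):=\limsup_{y,y'\to\bar y,\,y\ne y'}\frac{|F(y)-F(y')|}{|y-y'|}$. $\partial$ denotes the general (limiting) subdifferential: $v\in\partial g(\bar y)$ if there are $y^\nu\to\bar y$, $v^\nu\to v$ with $g(y^\nu)\to g(\bar y)$ and $g(y)\ge g(y^\nu)+v^\nu(y-y^\nu)+o(|y-y^\nu|)$. *)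

(* Defs.v *)
From Stdlib Require Import Reals Lra Classical ClassicalEpsilon.
From Stdlib Require Vectors.Fin.
Open Scope R_scope.

Definition Rn (n : nat) : Type := Fin.t n -> R.

Fixpoint sumsq (n : nat) : Rn n -> R :=
  match n return Rn n -> R with
  | O => fun _ => 0
  | S m => fun v => (v Fin.F1) ^ 2 + sumsq m (fun i => v (Fin.FS i))
  end.

Definition norm {n : nat} (v : Rn n) : R := sqrt (sumsq n v).
Definition dist {n : nat} (u v : Rn n) : R := norm (fun i => u i - v i).

Inductive Rbar : Type := Finite (r : R) | p_infty | m_infty.

Definition Rbar_le (a b : Rbar) : Prop :=
  match a, b with
  | m_infty, _ => True
  | _, p_infty => True
  | Finite x, Finite y => x <= y
  | _, _ => False
  end.

Definition Rbar_lt (a b : Rbar) : Prop := Rbar_le a b /\ a <> b.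

Definition Rbar_is_lub (S : Rbar -> Prop) (s : Rbar) : Prop :=
  (forall z, S z -> Rbar_le z s) /\
  (forall b, (forall z, S z -> Rbar_le z b) -> Rbar_le s b).

Definition Rbar_is_glb (S : Rbar -> Prop) (s : Rbar) : Prop :=
  (forall z, S z -> Rbar_le s z) /\
  (forall b, (forall z, S z -> Rbar_le b z) -> Rbar_le b s).

(** Supremum / infimum in the extended reals (they always exist). *)
Definition Rbar_sup (S : Rbar -> Prop) : Rbar :=
  epsilon (inhabits p_infty) (Rbar_is_lub S).
Definition Rbar_inf (S : Rbar -> Prop) : Rbar :=
  epsilon (inhabits p_infty) (Rbar_is_glb S).

(** Real supremum (used where the set is nonempty and bounded above). *)
Definition Rsup (E : R -> Prop) : R := epsilon (inhabits 0) (is_lub E).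

Definition fbar {n : nat} (f : Rn n -> R) (eps : R) (x : Rn n) : R :=
  Rsup (fun r => exists x', dist x' x <= eps /\ r = f x').

(** g_x (eps) = \bar f_eps (x)  (relevant for eps >= 0) *)
Definition gx {n : nat} (f : Rn n -> R) (x : Rn n) : R -> R :=
  fun eps => fbar f eps x.

(** calm F (ybar) = limsup_{y -> ybar, y <> ybar} |F y - F ybar| / |y - ybar|
    = inf_{delta > 0} sup { ... : 0 < |y - ybar| < delta } *)
Definition calm {n : nat} (F : Rn n -> R) (ybar : Rn n) : Rbar :=
  Rbar_inf (fun z => exists delta, delta > 0 /\
    z = Rbar_sup (fun w => exists y, 0 < dist y ybar < delta /\
          w = Finite (Rabs (F y - F ybar) / dist y ybar))).

(** lip G (ybar) = limsup_{y, y' -> ybar, y <> y'} |G y - G y'| / |y - y'|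
    for G : R -> R. *)
Definition lip (G : R -> R) (ybar : R) : Rbar :=
  Rbar_inf (fun z => exists delta, delta > 0 /\
    z = Rbar_sup (fun w => exists y y', y <> y' /\
          Rabs (y - ybar) < delta /\ Rabs (y' - ybar) < delta /\
          w = Finite (Rabs (G y - G y') / Rabs (y - y')))).

Definition regular_subgrad (g : R -> R) (y0 v : R) : Prop :=
  forall eta, eta > 0 -> exists delta, delta > 0 /\
    forall y, Rabs (y - y0) < delta ->
      g y >= g y0 + v * (y - y0) - eta * Rabs (y - y0).

Definition limiting_subdiff (g : R -> R) (ybar v : R) : Prop :=
  exists (ys vs : nat -> R),
    Un_cv ys ybar /\ Un_cv vs v /\ Un_cv (fun k => g (ys k)) (g ybar) /\
    forall k, regular_subgrad g (ys k) (vs k).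

Definition bdd_above_on_bdd {n : nat} (f : Rn n -> R) : Prop :=
  forall S : Rn n -> Prop, (exists r, forall y, S y -> norm y <= r) ->
    exists M, forall y, S y -> f y <= M.

(* Main.v *)
Require Import Defs.
From Stdlib Require Import Reals Lra Psatz Classical ClassicalEpsilon.
Require Import Defs.
Open Scope R_scope.

Lemma sumsq_nonneg n : forall v : Rn n, 0 <= sumsq n v.
Proof. induction n; intros v; simpl. lra. specialize (IHn (fun i => v (Fin.FS i))). nra. Qed.

Lemma sumsq_ext n : forall u v : Rn n, (forall i, u i = v i) -> sumsq n u = sumsq n v.
Proof. induction n; intros u v H; simpl. reflexivity.
  rewrite H. f_equal. apply IHn. intros; apply H. Qed.

Lemma sumsq_opp n : forall v : Rn n, sumsq n (fun i => - v i) = sumsq n v.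
Proof. induction n; intros v; simpl. reflexivity.
  rewrite (IHn (fun i => v (Fin.FS i))). ring. Qed.

Lemma sumsq_zero n : forall v : Rn n, (forall i, v i = 0) -> sumsq n v = 0.
Proof. induction n; intros v H; simpl. reflexivity.
  rewrite H. rewrite (IHn (fun i => v (Fin.FS i))). ring. intros; apply H. Qed.

Lemma cs2 a b p q A B : 0 <= A -> 0 <= B -> A*A = a*a + p*p -> B*B = b*b+q*q ->
  a*b + p*q <= A*B.
Proof. intros. assert (0 <= (a*q - b*p)^2) by apply pow2_ge_0.
  assert ((A*B)*(A*B) = (a*a+p*p)*(b*b+q*q)) by (rewrite <- H1, <- H2; ring).
  assert (0 <= A*B) by (apply Rmult_le_pos; auto).
  destruct (Rle_dec (a*b+p*q) (A*B)); auto. nra. Qed.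

Lemma minkowski n : forall u v : Rn n,
  sqrt (sumsq n (fun i => u i + v i)) <= sqrt (sumsq n u) + sqrt (sumsq n v).
Proof.
  induction n; intros u v; simpl.
  - rewrite sqrt_0; lra.
  - specialize (IHn (fun i => u (Fin.FS i)) (fun i => v (Fin.FS i))). simpl in IHn.
    set (a := u Fin.F1) in *. set (b := v Fin.F1) in *.
    set (U := sumsq n (fun i => u (Fin.FS i))) in *.
    set (V := sumsq n (fun i => v (Fin.FS i))) in *.
    set (W := sumsq n (fun i => u (Fin.FS i) + v (Fin.FS i))) in *.
    assert (HU : 0 <= U) by apply sumsq_nonneg.
    assert (HV : 0 <= V) by apply sumsq_nonneg.
    assert (HW : 0 <= W) by apply sumsq_nonneg.
    pose proof (sqrt_pos U). pose proof (sqrt_pos V). pose proof (sqrt_pos W).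
    pose proof (sqrt_sqrt U HU). pose proof (sqrt_sqrt V HV). pose proof (sqrt_sqrt W HW).
    assert (W <= (sqrt U + sqrt V)^2) by nra.
    assert (HA : 0 <= a^2 + U) by nra. assert (HB : 0 <= b^2 + V) by nra.
    pose proof (sqrt_pos (a^2+U)). pose proof (sqrt_pos (b^2+V)).
    pose proof (sqrt_sqrt _ HA). pose proof (sqrt_sqrt _ HB).
    pose proof (cs2 a b (sqrt U) (sqrt V) (sqrt (a^2+U)) (sqrt (b^2+V))
       ltac:(auto) ltac:(auto) ltac:(nra) ltac:(nra)).
    replace ((a+b)*((a+b)*1)) with ((a+b)^2) by ring; replace (a*(a*1)) with (a^2) by ring; replace (b*(b*1)) with (b^2) by ring. rewrite <- (sqrt_pow2 (sqrt (a^2+U) + sqrt (b^2+V))) by lra.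
    apply sqrt_le_1_alt. nra.
Qed.

Lemma norm_add n (u v : Rn n) : norm (fun i => u i + v i) <= norm u + norm v.
Proof. apply minkowski. Qed.

Lemma norm_ext n (u v : Rn n) : (forall i, u i = v i) -> norm u = norm v.
Proof. intros H; unfold norm; rewrite (sumsq_ext n u v H); auto. Qed.

Lemma dist_tri n (u v w : Rn n) : dist u w <= dist u v + dist v w.
Proof. unfold dist.
  rewrite (norm_ext n (fun i => u i - w i) (fun i => (u i - v i) + (v i - w i))) by (intros; ring).
  apply (norm_add n (fun i => u i - v i) (fun i => v i - w i)). Qed.

Lemma dist_sym n (u v : Rn n) : dist u v = dist v u.
Proof. unfold dist, norm.
  rewrite (sumsq_ext n (fun i => u i - v i) (fun i => - (v i - u i))) by (intros; ring).
  rewrite (sumsq_opp n (fun i => v i - u i)). reflexivity. Qed.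

Lemma dist_refl n (u : Rn n) : dist u u = 0.
Proof. unfold dist, norm. rewrite sumsq_zero by (intros; ring). apply sqrt_0. Qed.

Lemma norm_nonneg n (u : Rn n) : 0 <= norm u.
Proof. apply sqrt_pos. Qed.

Lemma norm_le n (y z : Rn n) : norm y <= dist y z + norm z.
Proof. unfold dist.
  rewrite (norm_ext n y (fun i => (y i - z i) + z i)) by (intros; ring).
  apply (norm_add n (fun i => y i - z i) z). Qed.

Lemma fbar_lub n (f : Rn n -> R) (hf : bdd_above_on_bdd f) r z : 0 <= r ->
  is_lub (fun v => exists x', dist x' z <= r /\ v = f x') (fbar f r z).
Proof.
  intros Hr. unfold fbar, Rsup. apply epsilon_spec.
  destruct (hf (fun y => dist y z <= r)) as [M HM].
  { exists (r + norm z). intros y Hy. pose proof (norm_le n y z). lra. }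
  destruct (completeness (fun v => exists x', dist x' z <= r /\ v = f x')) as [m Hm].
  - exists M. intros v [x' [H1 H2]]. subst. apply HM; auto.
  - exists (f z). exists z. split; auto. rewrite dist_refl; auto.
  - exists m; exact Hm.
Qed.

Lemma lub_mono (A B : R -> Prop) a b : is_lub A a -> is_lub B b ->
  (forall r, A r -> B r) -> a <= b.
Proof. intros [Ha1 Ha2] [Hb1 Hb2] H. apply Ha2. intros r Hr. apply Hb1, H, Hr. Qed.

Lemma fbar_upper n (f : Rn n -> R) (hf : bdd_above_on_bdd f) eps x y : 0 <= eps ->
  fbar f eps y <= fbar f (eps + dist y x) x.
Proof. intros He. pose proof (norm_nonneg n (fun i => y i - x i)) as Hd. fold (dist y x) in Hd.
  apply (lub_mono _ _ _ _ (fbar_lub n f hf eps y He) (fbar_lub n f hf (eps + dist y x) x ltac:(lra))).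
  intros v [x' [H1 H2]]. exists x'. split; auto. pose proof (dist_tri n x' y x). lra. Qed.

Lemma fbar_lower n (f : Rn n -> R) (hf : bdd_above_on_bdd f) eps x y : 0 <= eps - dist y x ->
  fbar f (eps - dist y x) x <= fbar f eps y.
Proof. intros He. pose proof (norm_nonneg n (fun i => y i - x i)) as Hd. fold (dist y x) in Hd.
  apply (lub_mono _ _ _ _ (fbar_lub n f hf (eps - dist y x) x He) (fbar_lub n f hf eps y ltac:(lra))).
  intros v [x' [H1 H2]]. exists x'. split; auto. pose proof (dist_tri n x' x y).
  rewrite (dist_sym n x y) in H. lra. Qed.

Lemma fbar_mono n (f : Rn n -> R) (hf : bdd_above_on_bdd f) x r1 r2 : 0 <= r1 -> r1 <= r2 ->
  fbar f r1 x <= fbar f r2 x.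
Proof. intros. apply (lub_mono _ _ _ _ (fbar_lub n f hf r1 x H) (fbar_lub n f hf r2 x ltac:(lra))).
  intros v [x' [H1 H2]]. exists x'. split; auto; lra. Qed.

Lemma Rbar_lub_ex (S : Rbar -> Prop) : exists s, Rbar_is_lub S s.
Proof.
destruct (classic (S p_infty)) as [Hp|Hp].
- exists p_infty; split; [intros z _; destruct z; simpl; auto | intros b Hb; apply Hb; exact Hp].
- set (E := fun r => S (Finite r)).
  destruct (classic (exists r, E r)) as [[r0 Hr0]|HE].
  + destruct (classic (bound E)) as [Hb|Hb].
    * destruct (completeness E Hb (ex_intro _ r0 Hr0)) as [m [Hm1 Hm2]].
      exists (Finite m). split.
      -- intros z Hz; destruct z as [r| |]; simpl. apply Hm1; exact Hz. contradiction. auto.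
      -- intros b Hb'. destruct b as [rb| |]; simpl; auto.
         ++ apply Hm2. intros r Hr. exact (Hb' _ Hr).
         ++ exact (Hb' _ Hr0).
    * exists p_infty. split. intros z _; destruct z; simpl; auto.
      intros b Hb'. destruct b as [rb| |]; simpl; auto.
      -- apply Hb; exists rb; intros r Hr; exact (Hb' _ Hr).
      -- exact (Hb' _ Hr0).
  + exists m_infty. split.
    * intros z Hz; destruct z as [r| |]; simpl; auto. apply HE; exists r; exact Hz.
    * intros b _; destruct b; simpl; auto.
Qed.

Lemma Rbar_glb_ex (S : Rbar -> Prop) : exists s, Rbar_is_glb S s.
Proof.
  destruct (Rbar_lub_ex (fun b => forall z, S z -> Rbar_le b z)) as [s [H1 H2]].
  exists s. split.
  - intros z Hz. apply H2. intros b Hb. apply Hb, Hz.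
  - intros b Hb. apply H1. exact Hb.
Qed.

Lemma sup_spec S : Rbar_is_lub S (Rbar_sup S).
Proof. unfold Rbar_sup. apply epsilon_spec, Rbar_lub_ex. Qed.
Lemma inf_spec S : Rbar_is_glb S (Rbar_inf S).
Proof. unfold Rbar_inf. apply epsilon_spec, Rbar_glb_ex. Qed.

Lemma Rbar_le_trans a b c : Rbar_le a b -> Rbar_le b c -> Rbar_le a c.
Proof. destruct a, b, c; simpl; auto; try lra; try tauto. Qed.

Lemma Rbar_le_antisym a b : Rbar_le a b -> Rbar_le b a -> a = b.
Proof. destruct a, b; simpl; try tauto. intros; f_equal; lra. Qed.

Lemma lub_unique S a b : Rbar_is_lub S a -> Rbar_is_lub S b -> a = b.
Proof. intros [A1 A2] [B1 B2]. apply Rbar_le_antisym; [apply A2, B1 | apply B2, A1]. Qed.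

Lemma div_gt a c d : 0 < d -> a > c * d -> a / d > c.
Proof. intros. apply Rmult_gt_reg_r with d; auto. unfold Rdiv. rewrite Rmult_assoc, Rinv_l; lra. Qed.
Lemma div_le a c d : 0 < d -> a <= c * d -> a / d <= c.
Proof. intros. apply Rmult_le_reg_r with d; auto. unfold Rdiv. rewrite Rmult_assoc, Rinv_l; lra. Qed.

Lemma le_eps a b : (forall e, e > 0 -> a <= b + e) -> a <= b.
Proof. intros H. destruct (Rle_dec a b); auto. specialize (H ((a-b)/2) ltac:(lra)). lra. Qed.

Lemma lip_finite G yb : Rbar_lt (lip G yb) p_infty -> exists L, lip G yb = Finite L /\ 0 <= L.
Proof.
  intros [_ Hne].
  assert (H0 : Rbar_le (Finite 0) (lip G yb)).
  { destruct (inf_spec (fun z => exists delta, delta > 0 /\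
    z = Rbar_sup (fun w => exists y y', y <> y' /\
          Rabs (y - yb) < delta /\ Rabs (y' - yb) < delta /\
          w = Finite (Rabs (G y - G y') / Rabs (y - y'))))) as [_ H2].
    apply H2. intros z [d [Hd ->]].
    destruct (sup_spec (fun w => exists y y', y <> y' /\
          Rabs (y - yb) < d /\ Rabs (y' - yb) < d /\
          w = Finite (Rabs (G y - G y') / Rabs (y - y')))) as [H3 _].
    apply Rbar_le_trans with (Finite (Rabs (G yb - G (yb + d/2)) / Rabs (yb - (yb + d/2)))).
    2:{ apply H3; exists yb, (yb + d/2). split; [lra|]. split; [|split; [|reflexivity]].
      - replace (yb - yb) with 0 by ring. rewrite Rabs_R0; lra.
      - replace (yb + d/2 - yb) with (d/2) by ring. rewrite Rabs_pos_eq; lra. }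
    simpl. unfold Rdiv. apply Rmult_le_pos. apply Rabs_pos. left; apply Rinv_0_lt_compat.
      apply Rabs_pos_lt. lra. }
  destruct (lip G yb) as [L| |]; simpl in *. exists L; auto. congruence. contradiction.
Qed.

Lemma lip_upper G yb L : lip G yb = Finite L -> forall eta, eta > 0 -> exists delta, delta > 0 /\
  forall y y', Rabs (y - yb) < delta -> Rabs (y' - yb) < delta ->
    Rabs (G y - G y') <= (L + eta) * Rabs (y - y').
Proof.
  intros HL eta Heta.
  destruct (classic (exists delta, delta > 0 /\
  forall y y', Rabs (y - yb) < delta -> Rabs (y' - yb) < delta ->
    Rabs (G y - G y') <= (L + eta) * Rabs (y - y'))) as [H|H]; auto. exfalso.
  assert (Rbar_le (Finite (L + eta)) (lip G yb)).
  { destruct (inf_spec (fun z => exists delta, delta > 0 /\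
    z = Rbar_sup (fun w => exists y y', y <> y' /\
          Rabs (y - yb) < delta /\ Rabs (y' - yb) < delta /\
          w = Finite (Rabs (G y - G y') / Rabs (y - y'))))) as [_ H2].
    apply H2. intros z [d [Hd ->]].
    destruct (classic (exists y y', Rabs (y - yb) < d /\ Rabs (y' - yb) < d /\
       Rabs (G y - G y') > (L + eta) * Rabs (y - y'))) as [[y [y' [h1 [h2 h3]]]]|H3].
    - destruct (sup_spec (fun w => exists y y', y <> y' /\
          Rabs (y - yb) < d /\ Rabs (y' - yb) < d /\
          w = Finite (Rabs (G y - G y') / Rabs (y - y')))) as [H4 _].
      assert (y <> y').
      { intros ->. replace (y' - y') with 0 in h3 by ring. rewrite Rabs_R0 in h3.
        replace (G y' - G y') with 0 in h3 by ring. rewrite Rabs_R0 in h3. lra. }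
      eapply Rbar_le_trans; [|apply H4; exists y, y'; repeat split; eauto].
      simpl. left. apply div_gt; auto. apply Rabs_pos_lt. lra.
    - exfalso. apply H. exists d. split; auto. intros y y' h1 h2.
      destruct (Rle_dec (Rabs (G y - G y')) ((L + eta) * Rabs (y - y'))); auto.
      exfalso. apply H3. exists y, y'. repeat split; auto. lra. }
  rewrite HL in H0. simpl in H0. lra.
Qed.

Lemma lip_lower G yb L : lip G yb = Finite L -> forall eta delta, eta > 0 -> delta > 0 ->
  exists y y', y <> y' /\ Rabs (y - yb) < delta /\ Rabs (y' - yb) < delta /\
    Rabs (G y - G y') / Rabs (y - y') > L - eta.
Proof.
  intros HL eta d Heta Hd.
  destruct (classic (exists y y', y <> y' /\ Rabs (y - yb) < d /\ Rabs (y' - yb) < d /\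
    Rabs (G y - G y') / Rabs (y - y') > L - eta)) as [H|H]; auto. exfalso.
  assert (Rbar_le (Rbar_sup (fun w => exists y y', y <> y' /\
          Rabs (y - yb) < d /\ Rabs (y' - yb) < d /\
          w = Finite (Rabs (G y - G y') / Rabs (y - y')))) (Finite (L - eta))).
  { destruct (sup_spec (fun w => exists y y', y <> y' /\
          Rabs (y - yb) < d /\ Rabs (y' - yb) < d /\
          w = Finite (Rabs (G y - G y') / Rabs (y - y')))) as [_ H4].
    apply H4. intros w [y [y' [h1 [h2 [h3 ->]]]]]. simpl.
    destruct (Rle_dec (Rabs (G y - G y') / Rabs (y - y')) (L - eta)); auto.
    exfalso; apply H; exists y, y'; repeat split; auto; lra. }
  assert (Rbar_le (lip G yb) (Rbar_sup (fun w => exists y y', y <> y' /\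
          Rabs (y - yb) < d /\ Rabs (y' - yb) < d /\
          w = Finite (Rabs (G y - G y') / Rabs (y - y'))))).
  { destruct (inf_spec (fun z => exists delta, delta > 0 /\
    z = Rbar_sup (fun w => exists y y', y <> y' /\
          Rabs (y - yb) < delta /\ Rabs (y' - yb) < delta /\
          w = Finite (Rabs (G y - G y') / Rabs (y - y'))))) as [H2 _].
    apply H2. exists d; split; auto. }
  pose proof (Rbar_le_trans _ _ _ H1 H0). rewrite HL in H2. simpl in H2. lra.
Qed.

Lemma calm_le n (F : Rn n -> R) x L :
  (forall eta, eta > 0 -> exists delta, delta > 0 /\ forall y, 0 < dist y x < delta ->
     Rabs (F y - F x) <= (L + eta) * dist y x) -> Rbar_le (calm F x) (Finite L).
Proof.
  intros H.
  assert (Hc : forall eta, eta > 0 -> Rbar_le (calm F x) (Finite (L + eta))).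
  { intros eta Heta. destruct (H eta Heta) as [d [Hd Hy]].
    eapply Rbar_le_trans.
    - destruct (inf_spec (fun z => exists delta, delta > 0 /\
    z = Rbar_sup (fun w => exists y, 0 < dist y x < delta /\
          w = Finite (Rabs (F y - F x) / dist y x)))) as [H2 _].
      apply H2. exists d; split; auto.
    - destruct (sup_spec (fun w => exists y, 0 < dist y x < d /\
          w = Finite (Rabs (F y - F x) / dist y x))) as [_ H4].
      apply H4. intros w [y [hy ->]]. simpl. apply div_le. lra. apply Hy; auto. }
  destruct (calm F x) as [c| |] eqn:E; simpl; auto.
  - apply le_eps. intros e He. specialize (Hc e He). simpl in Hc. lra.
  - specialize (Hc 1 ltac:(lra)). simpl in Hc. auto.
Qed.

Lemma Rabs_cases x : (0 <= x /\ Rabs x = x) \/ (x < 0 /\ Rabs x = - x).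
Proof. destruct (Rle_or_lt 0 x). left; split; auto; apply Rabs_pos_eq; auto.
  right; split; auto; apply Rabs_left; auto. Qed.

Ltac rabs := repeat match goal with
 | |- context [Rabs ?x] => let H := fresh in destruct (Rabs_cases x) as [[? H]|[? H]]; rewrite H in *; clear H
 | H0 : context [Rabs ?x] |- _ => let H := fresh in destruct (Rabs_cases x) as [[? H]|[? H]]; rewrite H in *; clear H
 end.

Lemma lipcont h t r C : r > 0 -> (forall y, Rabs (y - t) < r -> Rabs (h y - h t) <= C * Rabs (y - t)) ->
  continuity_pt h t.
Proof.
  intros Hr H. unfold continuity_pt, continue_in, limit1_in, limit_in. intros e He.
  assert (HC : 0 < Rabs C + 1) by (pose proof (Rabs_pos C); lra).
  exists (Rmin r (e / (Rabs C + 1))). split.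
  - apply Rmin_glb_lt; auto. apply Rdiv_lt_0_compat; lra.
  - intros y [_ Hy]. simpl in *. unfold R_dist in *.
    pose proof (Rmin_l r (e / (Rabs C + 1))). pose proof (Rmin_r r (e / (Rabs C + 1))).
    specialize (H y ltac:(lra)).
    assert (Rabs (y - t) * (Rabs C + 1) < e).
    { apply Rlt_le_trans with (e / (Rabs C + 1) * (Rabs C + 1)).
      apply Rmult_lt_compat_r; lra. unfold Rdiv; rewrite Rmult_assoc, Rinv_l; lra. }
    pose proof (Rabs_pos (y - t)). pose proof (Rle_abs C). nra.
Qed.

Lemma subgrad_bound G z v r M : regular_subgrad G z v -> r > 0 ->
  (forall y, Rabs (y - z) < r -> Rabs (G y - G z) <= M * Rabs (y - z)) -> Rabs v <= M.
Proof.
  intros Hs Hr HL. apply le_eps. intros e He.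
  destruct (Hs e He) as [d [Hd Hy]].
  set (u := Rmin d r / 2).
  assert (Hm : 0 < Rmin d r) by (apply Rmin_glb_lt; lra).
  assert (Hu : 0 < u) by (unfold u; lra).
  assert (Hu' : u < d /\ u < r) by (unfold u; pose proof (Rmin_l d r); pose proof (Rmin_r d r); lra).
  assert (E1 : Rabs (z + u - z) = u) by (replace (z+u-z) with u by ring; apply Rabs_pos_eq; lra).
  assert (E2 : Rabs (z - u - z) = u) by (replace (z-u-z) with (-u) by ring; rewrite Rabs_Ropp; apply Rabs_pos_eq; lra).
  pose proof (Hy (z+u) ltac:(lra)) as A1. pose proof (Hy (z-u) ltac:(lra)) as A2.
  pose proof (HL (z+u) ltac:(lra)) as B1. pose proof (HL (z-u) ltac:(lra)) as B2.
  rewrite E1 in A1, B1. rewrite E2 in A2, B2.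
  replace (z+u-z) with u in A1 by ring. replace (z-u-z) with (-u) in A2 by ring.
  pose proof (Rle_abs (G (z+u) - G z)). pose proof (Rle_abs (G (z-u) - G z)).
  clearbody u. replace (v * - u) with (- (v*u)) in A2 by ring.
  assert (H1 : v * u <= (M + e) * u) by lra.
  assert (H2 : - (v * u) <= (M + e) * u) by lra.
  replace (- (v*u)) with ((-v)*u) in H2 by ring.
  apply Rmult_le_reg_r in H1; auto. apply Rmult_le_reg_r in H2; auto.
  rabs; lra.
Qed.

Lemma cv_bound (u : nat -> R) l C : (forall k, Rabs (u k - l) <= C * / (INR k + 1)) -> Un_cv u l.
Proof.
  intros H e He.
  assert (HC : 0 < Rabs C + 1) by (pose proof (Rabs_pos C); lra).
  destruct (archimed_cor1 (e / (Rabs C + 1))) as [N [HN1 HN2]].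
  { apply Rdiv_lt_0_compat; lra. }
  exists N. intros k Hk. unfold R_dist. specialize (H k).
  assert (HN : 0 < INR N) by (apply lt_0_INR; lia).
  assert (INR N <= INR k + 1) by (apply le_INR in Hk; lra).
  assert (/ (INR k + 1) <= / INR N) by (apply Rinv_le_contravar; lra).
  assert (0 < / (INR k + 1)) by (apply Rinv_0_lt_compat; pose proof (pos_INR k); lra).
  assert ((Rabs C + 1) * / INR N < e).
  { apply Rmult_lt_reg_l with (/ (Rabs C + 1)). apply Rinv_0_lt_compat; lra.
    rewrite <- Rmult_assoc, Rinv_l by lra. unfold Rdiv in HN1. lra. }
  pose proof (Rle_abs C). nra.
Qed.

Lemma p_sq a y z : let p := fun t => (Rabs (a - t) + (a - t)) / 2 in
  p y * p y <= (p z - (y - z)) * (p z - (y - z)).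
Proof. intros p. unfold p.
  destruct (Rabs_cases (a - y)) as [[h1 e1]|[h1 e1]]; destruct (Rabs_cases (a - z)) as [[h2 e2]|[h2 e2]];
  rewrite e1, e2.
  - right; field.
  - replace ((a - y + (a - y))/2) with (a - y) by field. replace ((- (a - z) + (a - z))/2) with 0 by field.
    apply Rmult_le_compat; lra.
  - replace ((- (a - y) + (a - y))/2) with 0 by field. rewrite Rmult_0_l. apply Rle_0_sqr.
  - replace ((- (a - y) + (a - y))/2) with 0 by field. rewrite Rmult_0_l. apply Rle_0_sqr.
Qed.

Lemma mvt G lo hi a b c M eta : lo < a - c -> c > 0 -> a < b -> b < hi -> eta > 0 ->
 (forall y y', lo < y < hi -> lo < y' < hi -> Rabs (G y - G y') <= M * Rabs (y - y')) ->
 exists z v, a - c < z < b /\ regular_subgrad G z v /\ v >= (G b - G a)/(b - a) - eta.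
Proof.
  intros Hlo Hc0 Hab Hhi Heta HL.
  set (s := (G b - G a)/(b-a)).
  assert (Hs : G b = G a + s * (b - a)) by (unfold s; field; lra).
  set (lam := s - eta).
  set (K := (Rabs M + Rabs lam + 1)/c).
  assert (HKc : K * c = Rabs M + Rabs lam + 1) by (unfold K; field; lra).
  assert (HK : K > 0) by (unfold K; apply Rdiv_lt_0_compat; [pose proof (Rabs_pos M); pose proof (Rabs_pos lam); lra | lra]).
  set (p := fun t => (Rabs (a - t) + (a - t))/2).
  assert (pnn : forall t, 0 <= p t) by (intros t; unfold p; rabs; lra).
  set (Phi := fun t => G t - lam * t + K * (p t * p t)).
  assert (Hc : forall t, a - c <= t <= b -> continuity_pt Phi t).
  { intros t Ht.
    assert (cG : continuity_pt G t).
    { apply (lipcont G t (Rmin (t - lo) (hi - t)) M).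
      - apply Rmin_glb_lt; lra.
      - intros y Hy. pose proof (Rmin_l (t - lo) (hi - t)). pose proof (Rmin_r (t - lo) (hi - t)).
        apply HL; rabs; lra. }
    assert (cp : continuity_pt p t).
    { apply (lipcont p t 1 1); [lra|]. intros y _. unfold p. rabs; lra. }
    assert (cl : continuity_pt (fun y => lam * y) t).
    { apply (lipcont _ t 1 (Rabs lam)); [lra|]. intros y _.
      rewrite <- Rmult_minus_distr_l, Rabs_mult. lra. }
    unfold Phi. apply (continuity_pt_plus (fun y => G y - lam*y) (fun y => K * (p y * p y))).
    - apply (continuity_pt_minus G (fun y => lam*y)); auto.
    - apply (continuity_pt_mult (fun _ => K) (fun y => p y * p y)).
      + apply continuity_pt_const. intros ? ?; reflexivity.
      + apply (continuity_pt_mult p p); auto. }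
  destruct (continuity_ab_min Phi (a-c) b ltac:(lra) Hc) as [z [Hz1 Hz2]].
  assert (pa : p a = 0) by (unfold p; replace (a-a) with 0 by ring; rewrite Rabs_R0; lra).
  assert (pb : p b = 0) by (unfold p; rewrite Rabs_left by lra; lra).
  assert (pac : p (a - c) = c) by (unfold p; replace (a - (a-c)) with c by ring; rewrite Rabs_pos_eq by lra; lra).
  assert (Hb : Phi a < Phi b).
  { unfold Phi; rewrite pa, pb, Hs.
    assert (eta * (b - a) > 0) by (apply Rmult_lt_0_compat; lra).
    unfold lam. lra. }
  assert (Hac : Phi a < Phi (a - c)).
  { unfold Phi; rewrite pa, pac.
    assert (Hg := HL (a - c) a ltac:(lra) ltac:(lra)).
    replace (a - c - a) with (- c) in Hg by ring. rewrite Rabs_Ropp, (Rabs_pos_eq c) in Hg by lra.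
    assert (M * c <= Rabs M * c) by (apply Rmult_le_compat_r; [lra| apply Rle_abs]).
    assert (- (Rabs lam * c) <= lam * c).
    { assert (- Rabs lam <= lam) by (rabs; lra). 
      replace (- (Rabs lam * c)) with ((- Rabs lam) * c) by ring. apply Rmult_le_compat_r; lra. }
    assert (K * (c * c) = (Rabs M + Rabs lam + 1) * c) by (rewrite <- HKc; ring).
    pose proof (Rle_abs (G (a - c) - G a)).
    pose proof (Rle_abs (- (G (a - c) - G a))). rewrite Rabs_Ropp in H3.
    assert (lam * (a - c) = lam * a - lam * c) by ring.
    lra. }
  assert (Hza : Phi z <= Phi a) by (apply Hz1; lra).
  assert (Hz3 : a - c < z < b).
  { split; destruct (Req_dec z (a - c)); destruct (Req_dec z b); subst; try lra. }
  exists z, (lam + 2 * K * p z). split; [exact Hz3|split].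
  - intros e He. exists (Rmin (Rmin (z - (a-c)) (b - z)) (e/K)). split.
    + apply Rmin_glb_lt; [apply Rmin_glb_lt; lra | apply Rdiv_lt_0_compat; lra].
    + intros y Hy.
      pose proof (Rmin_l (Rmin (z - (a-c)) (b - z)) (e/K)). pose proof (Rmin_r (Rmin (z - (a-c)) (b - z)) (e/K)).
      pose proof (Rmin_l (z - (a-c)) (b - z)). pose proof (Rmin_r (z - (a-c)) (b - z)).
      assert (Hyr : a - c <= y <= b) by (rabs; lra).
      specialize (Hz1 y Hyr). unfold Phi in Hz1.
      pose proof (p_sq a y z) as Hp. change (p y * p y <= (p z - (y - z)) * (p z - (y - z))) in Hp.
      assert (K * (p y * p y) <= K * ((p z - (y - z)) * (p z - (y - z)))) by (apply Rmult_le_compat_l; lra).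
      assert (HKy : K * Rabs (y - z) < e).
      { apply Rlt_le_trans with (K * (e / K)). apply Rmult_lt_compat_l; lra.
        right; field; lra. }
      assert (K * ((y - z) * (y - z)) <= e * Rabs (y - z)).
      { replace ((y - z) * (y - z)) with (Rabs (y - z) * Rabs (y - z)) by (rabs; ring).
        rewrite <- Rmult_assoc. apply Rmult_le_compat_r; [apply Rabs_pos| lra]. }
      nra.
  - unfold lam. fold s. pose proof (pnn z).
    assert (0 <= K * p z) by (apply Rmult_le_pos; lra). lra.
Qed.

Lemma lim_bound G yb L v :
 (forall eta, eta > 0 -> exists delta, delta > 0 /\ forall y y', Rabs (y - yb) < delta ->
    Rabs (y' - yb) < delta -> Rabs (G y - G y') <= (L + eta) * Rabs (y - y')) ->
 limiting_subdiff G yb v -> Rabs v <= L.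
Proof.
  intros Hup [ys [vs [Hy [Hv [_ Hs]]]]].
  apply le_eps. intros e He.
  destruct (Hup (e/2) ltac:(lra)) as [d [Hd HL]].
  destruct (Hy (d/2) ltac:(lra)) as [N1 HN1].
  destruct (Hv (e/2) ltac:(lra)) as [N2 HN2].
  specialize (HN1 (max N1 N2) (Nat.le_max_l _ _)). specialize (HN2 (max N1 N2) (Nat.le_max_r _ _)).
  unfold R_dist in *. set (k := max N1 N2) in *.
  assert (Rabs (vs k) <= L + e/2).
  { apply (subgrad_bound G (ys k) (vs k) (d/2) (L + e/2)); [apply Hs | lra|].
    intros y Hy'. apply HL; apply Rabs_def2 in Hy'; apply Rabs_def2 in HN1; apply Rabs_def1; lra. }
  pose proof (Rabs_triang_inv (vs k) v). pose proof (Rabs_triang_inv v (vs k)).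
  rewrite Rabs_minus_sym in H1. lra.
Qed.

Lemma lim_L G yb L rho : 0 <= L -> rho > 0 ->
 (forall eta, eta > 0 -> exists delta, delta > 0 /\ forall y y', Rabs (y - yb) < delta ->
    Rabs (y' - yb) < delta -> Rabs (G y - G y') <= (L + eta) * Rabs (y - y')) ->
 (forall eta delta, eta > 0 -> delta > 0 -> exists y y', y <> y' /\ Rabs (y - yb) < delta /\
    Rabs (y' - yb) < delta /\ Rabs (G y - G y') / Rabs (y - y') > L - eta) ->
 (forall a b, Rabs (a - yb) < rho -> Rabs (b - yb) < rho -> a <= b -> G a <= G b) ->
 limiting_subdiff G yb L.
Proof.
  intros HL0 Hrho Hup Hlo Hmono.
  assert (Hk : forall k : nat, exists q : R * R,
   Rabs (fst q - yb) <= (L + 2) * / (INR k + 1) /\ Rabs (snd q - L) <= (L+2) * / (INR k + 1) /\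
   Rabs (G (fst q) - G yb) <= (L+2) * / (INR k + 1) /\ regular_subgrad G (fst q) (snd q)).
  { intros k. set (eta := / (INR k + 1)).
    assert (He : 0 < eta) by (apply Rinv_0_lt_compat; pose proof (pos_INR k); lra).
    assert (He1 : eta <= 1).
    { unfold eta. rewrite <- Rinv_1. apply Rinv_le_contravar; [lra|]. pose proof (pos_INR k); lra. }
    destruct (Hup eta He) as [d [Hd HL]].
    set (d1 := Rmin (Rmin d rho) eta / 4).
    assert (Hd1 : 0 < d1 /\ d1 <= d/4 /\ d1 <= rho/4 /\ d1 <= eta/4).
    { unfold d1. pose proof (Rmin_l (Rmin d rho) eta); pose proof (Rmin_r (Rmin d rho) eta);
      pose proof (Rmin_l d rho); pose proof (Rmin_r d rho).
      assert (0 < Rmin (Rmin d rho) eta) by (repeat apply Rmin_glb_lt; lra). lra. }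
    destruct (Hlo eta d1 He ltac:(lra)) as [y [y' [Hne [Hy [Hy' Hq]]]]].
    assert (Hab : exists a b, a < b /\ Rabs (a - yb) < d1 /\ Rabs (b - yb) < d1 /\
                  (G b - G a) / (b - a) > L - eta).
    { destruct (Rlt_or_le y y') as [Hlt|Hle].
      - exists y, y'. split; [auto|split; [auto|split; [auto|]]].
        assert (G y <= G y') by (apply Hmono; lra).
        rewrite (Rabs_minus_sym (G y)), (Rabs_minus_sym y), (Rabs_pos_eq (G y' - G y)),
          (Rabs_pos_eq (y' - y)) in Hq by lra. exact Hq.
      - assert (y' < y) by (destruct Hle; auto; subst; congruence).
        exists y', y. split; [auto|split; [auto|split; [auto|]]].
        assert (G y' <= G y) by (apply Hmono; lra).
        rewrite (Rabs_pos_eq (G y - G y')), (Rabs_pos_eq (y - y')) in Hq by lra. exact Hq. }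
    clear y y' Hne Hy Hy' Hq.
    destruct Hab as [a [b [Hab [Ha [Hb Hs]]]]].
    apply Rabs_def2 in Ha. apply Rabs_def2 in Hb.
    destruct (mvt G (yb - d) (yb + d) a b d1 (L + eta) eta) as [z [v [Hz [Hsub Hv]]]];
      try lra.
    { intros y0 y1 h0 h1. apply HL; apply Rabs_def1; lra. }
    exists (z, v). simpl.
    assert (Hv1 : Rabs v <= L + eta).
    { apply (subgrad_bound G z v (d/2) (L + eta)); [exact Hsub | lra |].
      intros y0 Hy0. apply Rabs_def2 in Hy0. apply HL; apply Rabs_def1; lra. }
    assert (Hzy : Rabs (z - yb) < eta / 2) by (apply Rabs_def1; lra).
    assert (HG : Rabs (G z - G yb) <= (L + eta) * Rabs (z - yb)).
    { apply HL. apply Rabs_def1; lra. replace (yb - yb) with 0 by ring. rewrite Rabs_R0; lra. }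
    assert (2 * eta <= (L + 2) * eta) by nra.
    split; [lra|split; [|split; [|exact Hsub]]].
    - pose proof (Rle_abs v). apply Rabs_le. lra.
    - assert ((L + eta) * Rabs (z - yb) <= (L + eta) * (eta / 2)) by (apply Rmult_le_compat_l; lra).
      nra. }
  set (F := fun k => proj1_sig (constructive_indefinite_description _ (Hk k))).
  assert (HF := fun k => proj2_sig (constructive_indefinite_description _ (Hk k))).
  exists (fun k => fst (F k)), (fun k => snd (F k)).
  split; [|split; [|split]].
  - apply cv_bound with (L + 2). intros k. apply (HF k).
  - apply cv_bound with (L + 2). intros k. apply (HF k).
  - apply cv_bound with (L + 2). intros k. apply (HF k).
  - intros k. apply (HF k).
Qed.

Theorem corollary3p4 (n : nat) (f : Rn n -> R) (x : Rn n) (eps : R)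
  (hf : bdd_above_on_bdd f) (heps : eps > 0)
  (hlip : Rbar_lt (lip (gx f x) eps) p_infty) :
  Rbar_le (calm (fbar f eps) x) (lip (gx f x) eps) /\
  lip (gx f x) eps =
    Rbar_sup (fun w => exists v, limiting_subdiff (gx f x) eps v /\
                                 w = Finite (Rabs v)).
Proof.
  destruct (lip_finite _ _ hlip) as [L [HL HL0]].
  pose proof (lip_upper _ _ L HL) as Hup. pose proof (lip_lower _ _ L HL) as Hlo.
  rewrite HL. split.
  - apply calm_le. intros eta Heta. destruct (Hup eta Heta) as [d [Hd Hg]].
    exists (Rmin d eps). split. apply Rmin_glb_lt; lra.
    intros y [Hy1 Hy2]. pose proof (Rmin_l d eps); pose proof (Rmin_r d eps).
    pose proof (fbar_upper n f hf eps x y ltac:(lra)) as U.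
    pose proof (fbar_lower n f hf eps x y ltac:(lra)) as Lo.
    set (dd := dist y x) in *.
    assert (G1 := Hg (eps + dd) eps). assert (G2 := Hg (eps - dd) eps).
    unfold gx in G1, G2.
    replace (eps + dd - eps) with dd in G1 by ring. replace (eps - dd - eps) with (- dd) in G2 by ring.
    replace (eps - eps) with 0 in G1, G2 by ring. rewrite Rabs_R0 in G1, G2.
    rewrite Rabs_Ropp in G2. rewrite (Rabs_pos_eq dd) in G1, G2 by lra.
    specialize (G1 ltac:(lra) ltac:(lra)). specialize (G2 ltac:(lra) ltac:(lra)).
    pose proof (Rle_abs (fbar f (eps + dd) x - fbar f eps x)).
    pose proof (Rle_abs (- (fbar f (eps - dd) x - fbar f eps x))). rewrite Rabs_Ropp in H2.
    apply Rabs_le. lra.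
  - symmetry. eapply lub_unique; [apply sup_spec|]. split.
    + intros w [v [Hv ->]]. simpl. apply (lim_bound _ _ _ _ Hup Hv).
    + intros b Hb. apply Rbar_le_trans with (Finite (Rabs L)).
      * simpl. rewrite Rabs_pos_eq; lra.
      * apply Hb. exists L; split; auto. apply (lim_L (gx f x) eps L eps); auto.
        intros a b' Ha Hb' Hab. unfold gx. apply (fbar_mono n f hf x); auto.
        apply Rabs_def2 in Ha; lra.
Qed.
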